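(* Let $A$ be a $\mathbb{Q}$-domain, $K=\operatorname{frac}(A)$, $B=A^{[n]}$ and $D\in \operatorname{LND}_A(B)$. Let $D_K$ denote the extension of $D$ to $K\otimes_A B=K^{[n]}$. Assume that $\operatorname{rank} D=\operatorname{rank} D_K$. If $D_K$ is rigid, then $D$ is rigid.
   Context: All rings are commutative integral domains containing $\mathbb{Q}$. For a ring $A$, $A^{[n]}$ denotes an $A$-algebra isomorphic to the polynomial ring in $n$ variables over $A$. If $B=A^{[n]}$, a coordinate system of $B$ over $A$ is an ordered $n$-tuple $(X_1,\dots,X_n)$ of elements of $B$ with $A[X_1,\dots,X_n]=B$; $\Gamma(B)$ denotes the set of all such. An $A$-derivation $D$ of $B$ is locally nilpotent if for every $x\in B$ there is $s>0$ with $D^s(x)=0$; $\operatorname{LND}_A(B)$ is the set of locally nilpotent $A$-derivations of $B$. The rank of $D$ is the least integer $r\ge 0$ such that there is a coordinate system $(X_1,\dots,X_n)$ of $B$ over $A$ with $A[X_1,\dots,X_{n-r}]\subset\ker D$. For $D$ of rank $r$, $\Gamma_D(B)$ is the set of $(X_1,\dots,X_n)\in\Gamma(B)$ with $A[X_1,\dots,X_{n-r}]\subset \ker D$. $D$ is rigid if $A[X_1,\dots,X_{n-r}]=A[X_1',\dots,X_{n-r}']$ whenever $(X_1,\dots,X_n)$ and $(X_1',\dots,X_n')$ both belong to $\Gamma_D(B)$. (The same definitions apply over $K$ to $D_K$.) *)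

(* Defs.v *)
From HB Require Import structures.
From mathcomp Require Import all_boot all_order all_algebra.
Set Implicit Arguments. Unset Strict Implicit. Unset Printing Implicit Defensive.
Import Order.TTheory GRing.Theory Num.Theory.
Local Open Scope ring_scope.

(* Polynomial ring in n variables over R, built as iterated univariate
   polynomial rings: R^[0] = R, R^[m+1] = (R^[m])[T]. *)
Fixpoint mpoly (R : comNzRingType) (n : nat) : comNzRingType :=
  if n is m.+1 then ({poly mpoly R m} : comNzRingType) else R.

Fixpoint cm (R : comNzRingType) (n : nat) : R -> mpoly R n :=
  match n return R -> mpoly R n with
  | 0 => fun a => a
  | m.+1 => fun a => ((@cm R m a)%:P : {poly mpoly R m})
  end.

Fixpoint mapm (R S : comNzRingType) (f : R -> S) (n : nat) : mpoly R n -> mpoly S n :=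
  match n return mpoly R n -> mpoly S n with
  | 0 => f
  | m.+1 => fun p => (map_poly (@mapm R S f m) (p : {poly mpoly R m}) : {poly mpoly S m})
  end.

(* evaluation of a polynomial in n variables at a sequence xs of elements of
   an R-algebra S (structure map phi); the outer variable is sent to head xs *)
Fixpoint evalm (R S : comNzRingType) (phi : R -> S) (n : nat) : mpoly R n -> seq S -> S :=
  match n return mpoly R n -> seq S -> S with
  | 0 => fun c _ => phi c
  | m.+1 => fun p xs =>
      \sum_(i < size (p : {poly mpoly R m}))
        @evalm R S phi m ((p : {poly mpoly R m})`_i) (behead xs) * (head 0 xs) ^+ i
  end.

Arguments cm {R} n.
Arguments mapm {R S} f n.
Arguments evalm {R S} phi n.

Definition in_subalg (R S : comNzRingType) (phi : R -> S) (xs : seq S) (b : S) : Prop :=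
  exists p : mpoly R (size xs), b = evalm phi (size xs) p xs.

(* R contains Q *)
Definition containsQ (R : comUnitRingType) : Prop :=
  forall m : nat, (0 < m)%N -> (m%:R : R) \is a GRing.unit.

Definition isDer (R S : comNzRingType) (phi : R -> S) (D : S -> S) : Prop :=
  [/\ forall x y, D (x + y) = D x + D y,
      forall a x, D (phi a * x) = phi a * D x &
      forall x y, D (x * y) = x * D y + y * D x].

Definition isLND (R S : comNzRingType) (phi : R -> S) (D : S -> S) : Prop :=
  isDer phi D /\ forall x, exists s : nat, (0 < s)%N /\ iter s D x = 0.

Definition coord_sys (R S : comNzRingType) (phi : R -> S) (n : nat) (X : seq S) : Prop :=
  size X = n /\ forall b, in_subalg phi X b.

Definition killed (R S : comNzRingType) (phi : R -> S) (D : S -> S) (xs : seq S) : Prop :=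
  forall b, in_subalg phi xs b -> D b = 0.

Definition GammaD (R S : comNzRingType) (phi : R -> S) (n : nat) (D : S -> S)
    (r : nat) (X : seq S) : Prop :=
  coord_sys phi n X /\ killed phi D (take (n - r) X).

Definition has_rank (R S : comNzRingType) (phi : R -> S) (n : nat) (D : S -> S)
    (r : nat) : Prop :=
  (exists X, GammaD phi n D r X) /\
  forall r', (exists X, GammaD phi n D r' X) -> (r <= r')%N.

Definition rigid (R S : comNzRingType) (phi : R -> S) (n : nat) (D : S -> S) : Prop :=
  forall r, has_rank phi n D r ->
  forall X X', GammaD phi n D r X -> GammaD phi n D r X' ->
  forall b, in_subalg phi (take (n - r) X) b <-> in_subalg phi (take (n - r) X') b.

(* Main.v *)
Require Import Defs.
From HB Require Import structures.
From mathcomp Require Import all_boot all_order all_algebra.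
Set Implicit Arguments. Unset Strict Implicit. Unset Printing Implicit Defensive.
Import Order.TTheory GRing.Theory Num.Theory.
Local Open Scope ring_scope.

Definition rh (R S : comNzRingType) (f : R -> S) : Prop :=
  [/\ forall x y, f (x + y) = f x + f y, forall x y, f (x * y) = f x * f y & f 1 = 1].

Lemma rh0 (R S : comNzRingType) (f : R -> S) : rh f -> f 0 = 0.
Proof. by case=> fD _ _; apply: (@addrI _ (f 0)); rewrite -fD !addr0. Qed.

Lemma rhN (R S : comNzRingType) (f : R -> S) : rh f -> forall x, f (- x) = - f x.
Proof.
move=> h x; have f0 := rh0 h; case: h => fD _ _.
by apply: (@addrI _ (f x)); rewrite -fD !subrr f0.
Qed.

Lemma rh_sum (R S : comNzRingType) (f : R -> S) (I : Type) (r : seq I) (P : pred I) F :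
  rh f -> f (\sum_(i <- r | P i) F i) = \sum_(i <- r | P i) f (F i).
Proof.
move=> h; have f0 := rh0 h; case: h => fD _ _.
by apply: (big_morph f fD f0).
Qed.

Lemma rhX (R S : comNzRingType) (f : R -> S) : rh f -> forall x k, f (x ^+ k) = f x ^+ k.
Proof.
move=> [fD fM f1] x; elim=> [|k IH]; first by rewrite !expr0.
by rewrite !exprS fM IH.
Qed.

Lemma rhMn (R S : comNzRingType) (f : R -> S) : rh f -> forall x k, f (x *+ k) = f x *+ k.
Proof.
move=> h x; have f0 := rh0 h; case: h => fD _ _; elim=> [|k IH]; first by rewrite !mulr0n.
by rewrite !mulrS fD IH.
Qed.

Lemma rh_comp (R S T : comNzRingType) (f : R -> S) (g : S -> T) :
  rh f -> rh g -> rh (g \o f).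
Proof. by move=> [fD fM f1] [gD gM g1]; split=> /= *; rewrite ?fD ?fM ?f1. Qed.

Lemma coef_mapr (R S : comNzRingType) (f : R -> S) (p : {poly R}) i :
  rh f -> (map_poly f p)`_i = f p`_i.
Proof. by move=> h; rewrite coef_map_id0 ?(rh0 h). Qed.

Lemma rh_map (R S : comNzRingType) (f : R -> S) : rh f -> rh (map_poly f).
Proof.
move=> h; have f0 := rh0 h; have := h; case=> fD fM f1; split.
- by move=> p q; apply/polyP=> i; rewrite coefD !coef_mapr // coefD fD.
- move=> p q; apply/polyP=> i; rewrite coefM !coef_mapr // coefM (rh_sum _ _ _ h).
  by apply: eq_bigr => j _; rewrite fM !coef_mapr.
- by apply/polyP=> i; rewrite coef_mapr // !coefC; case: (i == 0%N); rewrite ?f1.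
Qed.

Lemma map_polyCr (R S : comNzRingType) (f : R -> S) c :
  rh f -> map_poly f c%:P = (f c)%:P.
Proof.
by move=> h; apply/polyP=> i; rewrite coef_mapr // !coefC; case: (i == 0%N); rewrite ?(rh0 h).
Qed.

Lemma rh_polyC (R : comNzRingType) : rh (fun c : R => c%:P).
Proof. by split=> *; rewrite ?polyCD ?polyCM. Qed.

Lemma rh_cm (R : comNzRingType) n : rh (@cm R n).
Proof.
elim: n => [|n IH] /=; first by split.
exact: (rh_comp IH (@rh_polyC _)).
Qed.

Lemma rh_mapm (R S : comNzRingType) (f : R -> S) n : rh f -> rh (mapm f n).
Proof. by move=> h; elim: n => [|n IH] //=; apply: rh_map. Qed.

Lemma mapm_cm (R S : comNzRingType) (f : R -> S) n a :
  rh f -> mapm f n (cm n a) = cm n (f a).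
Proof.
move=> h; elim: n => [|n IH] //=.
by rewrite map_polyCr ?IH //; apply: rh_mapm.
Qed.

Lemma evalm0 (R S : comNzRingType) (phi : R -> S) m xs : rh phi -> evalm phi m 0 xs = 0.
Proof. by move=> h; case: m => [|m] /=; rewrite ?(rh0 h) ?size_poly0 ?big_ord0. Qed.

Lemma sum_pad (S : comNzRingType) (N M : nat) (F : nat -> S) :
  (forall j, (N <= j)%N -> F j = 0) -> (N <= M)%N ->
  \sum_(j < M) F j = \sum_(j < N) F j.
Proof.
move=> F0 le; rewrite -(subnKC le) big_split_ord /= [X in _ + X]big1 ?addr0 //.
by move=> j _; rewrite F0 // leq_addr.
Qed.

Lemma sum_padn (N M : nat) (F : nat -> nat) :
  (forall j, (N <= j)%N -> F j = 0%N) -> (N <= M)%N ->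
  (\sum_(j < M) F j = \sum_(j < N) F j)%N.
Proof.
move=> F0 le; rewrite -(subnKC le) big_split_ord /= [X in (_ + X)%N]big1 ?addn0 //.
by move=> j _; rewrite F0 // leq_addr.
Qed.

Lemma evalm_wide (R S : comNzRingType) (phi : R -> S) m (p : mpoly R m.+1) xs N :
  rh phi -> (size (p : {poly mpoly R m}) <= N)%N ->
  evalm phi m.+1 p xs =
  \sum_(i < N) evalm phi m (p : {poly mpoly R m})`_i (behead xs) * head 0 xs ^+ i.
Proof.
move=> h le /=; rewrite (@sum_pad _ (size (p : {poly mpoly R m})) N (fun i => evalm phi m (p : {poly mpoly R m})`_i (behead xs) * head 0 xs ^+ i)) //.
by move=> j lej; rewrite nth_default // evalm0 // mul0r.
Qed.

Lemma evalm_h (R S : comNzRingType) (phi : R -> S) m (p : mpoly R m.+1) xs :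
  rh phi -> evalm phi m.+1 p xs =
  (map_poly (fun c => evalm phi m c (behead xs)) (p : {poly mpoly R m})).[head 0 xs].
Proof.
move=> h; rewrite (horner_coef_wide _ (size_poly _ _)) /=.
by apply: eq_bigr => i _; rewrite coef_poly ltn_ord.
Qed.

Lemma rh_horner (S : comNzRingType) (x : S) : rh (fun p : {poly S} => p.[x]).
Proof. by split=> *; rewrite ?hornerD ?hornerM ?hornerC. Qed.

Lemma rh_evalm (R S : comNzRingType) (phi : R -> S) m xs :
  rh phi -> rh (fun p => evalm phi m p xs).
Proof.
move=> h; elim: m xs => [|m IH] xs //=.
have [HD HM H1] := rh_comp (rh_map (IH (behead xs))) (@rh_horner _ (head 0 xs)).
split.
- by move=> p q; rewrite -!/(evalm phi m.+1 _ xs) !evalm_h //; apply: HD.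
- by move=> p q; rewrite -!/(evalm phi m.+1 _ xs) !evalm_h //; apply: HM.
- by rewrite -!/(evalm phi m.+1 _ xs) !evalm_h //; apply: H1.
Qed.

Lemma evalm_cm (R S : comNzRingType) (phi : R -> S) m a xs :
  rh phi -> evalm phi m (cm m a) xs = phi a.
Proof.
move=> h; elim: m xs => [|m IH] xs //=.
rewrite -/(evalm phi m.+1 _ xs) evalm_h // map_polyCr ?hornerC ?IH //.
exact: rh_evalm.
Qed.

Lemma head_map (S T : comNzRingType) (g : S -> T) (xs : seq S) :
  rh g -> head 0 (map g xs) = g (head 0 xs).
Proof. by move=> h; case: xs => [|x s] //=; rewrite (rh0 h). Qed.

Lemma evalm_comm (R S T : comNzRingType) (phi : R -> S) (g : S -> T) m p xs :
  rh g -> g (evalm phi m p xs) = evalm (g \o phi) m p (map g xs).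
Proof.
move=> h; elim: m p xs => [|m IH] p xs //=.
rewrite (rh_sum _ _ _ h); apply: eq_bigr => i _.
have [_ gM _] := h.
by rewrite gM (rhX h) IH head_map // behead_map.
Qed.

Lemma evalm_ext (R S : comNzRingType) (phi psi : R -> S) m p xs :
  phi =1 psi -> evalm phi m p xs = evalm psi m p xs.
Proof.
move=> e; elim: m p xs => [|m IH] p xs //=.
by apply: eq_bigr => i _; rewrite IH.
Qed.

Lemma evalm_mapm (R' R S : comNzRingType) (hh : R' -> R) (phi : R -> S) m p xs :
  rh hh -> rh phi -> evalm phi m (mapm hh m p) xs = evalm (phi \o hh) m p xs.
Proof.
move=> rhh h; elim: m p xs => [|m IH] p xs //=.
rewrite -/(evalm phi m.+1 _ xs) -/(evalm (phi \o hh) m.+1 _ xs) !evalm_h //; last first.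
  exact: rh_comp.
rewrite -map_poly_comp_id0 ?evalm0 //; congr (horner _ _).
by apply: eq_map_poly => c /=; rewrite IH.
Qed.

Lemma evalm_closed (R S : comNzRingType) (phi : R -> S) m p xs (P : S -> Prop) :
  rh phi -> (forall x y, P x -> P y -> P (x + y)) -> (forall x y, P x -> P y -> P (x * y)) ->
  (forall a, P (phi a)) -> (forall x, x \in xs -> P x) -> P (evalm phi m p xs).
Proof.
move=> h PD PM PC Pxs; elim: m p xs Pxs => [|m IH] p xs Pxs //=.
have P0 : P 0 by rewrite -(rh0 h).
have P1 : P 1 by case: h => _ _ <-.
apply: (big_ind P P0 PD) => i _; apply: (PM).
  by apply: IH => x /mem_behead; apply: Pxs.
have Ph : P (head 0 xs) by case: xs Pxs => [|x s] Pxs //=; apply: Pxs; rewrite inE eqxx.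
elim: (nat_of_ord i) => [|k IHk]; first by rewrite expr0.
by rewrite exprS; apply: (PM).
Qed.

Fixpoint var (R : comNzRingType) (n i : nat) : mpoly R n :=
  match n return mpoly R n with
  | 0 => 0
  | m.+1 => if i is i'.+1 then ((var R m i')%:P : {poly mpoly R m})
            else ('X : {poly mpoly R m})
  end.

Fixpoint vars (R : comNzRingType) (n : nat) : seq (mpoly R n) :=
  match n return seq (mpoly R n) with
  | 0 => [::]
  | m.+1 => ('X : {poly mpoly R m}) :: map (fun c => (c%:P : {poly mpoly R m})) (vars R m)
  end.

Lemma size_vars (R : comNzRingType) n : size (vars R n) = n.
Proof. by elim: n => [|n IH] //=; rewrite size_map IH. Qed.

Lemma nth_vars (R : comNzRingType) n i : (i < n)%N -> nth 0 (vars R n) i = var R n i.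
Proof.
elim: n i => [|n IH] [|i] //= lt.
by rewrite (nth_map 0) ?size_vars // IH.
Qed.

Lemma map_polyXr (R S : comNzRingType) (f : R -> S) :
  rh f -> map_poly f 'X = 'X.
Proof.
move=> h; apply/polyP=> i; rewrite coef_mapr // !coefX.
by case: (i == 1%N); [case: h | rewrite (rh0 h)].
Qed.

Lemma evalm_var (R S : comNzRingType) (phi : R -> S) m i xs :
  rh phi -> (i < m)%N -> evalm phi m (var R m i) xs = nth 0 xs i.
Proof.
move=> h; elim: m i xs => [|m IH] [|i] xs //= lt.
  rewrite -/(evalm phi m.+1 _ xs) evalm_h // map_polyXr ?hornerX; last exact: rh_evalm.
  by case: xs.
rewrite -/(evalm phi m.+1 _ xs) evalm_h // map_polyCr ?hornerC ?IH //; last exact: rh_evalm.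
by case: xs => [|x s] //=; rewrite nth_nil.
Qed.

Lemma in_subalg_evalm (R S : comNzRingType) (phi : R -> S) m p xs :
  rh phi -> in_subalg phi xs (evalm phi m p xs).
Proof.
move=> h; apply: evalm_closed => //.
- move=> x y [p1 ->] [p2 ->]; exists (p1 + p2).
  by have [-> _ _] := rh_evalm (size xs) xs h.
- move=> x y [p1 ->] [p2 ->]; exists (p1 * p2).
  by have [_ -> _] := rh_evalm (size xs) xs h.
- by move=> a; exists (cm _ a); rewrite evalm_cm.
- move=> x xin; exists (var R (size xs) (index x xs)).
  by rewrite evalm_var ?index_mem // nth_index.
Qed.

Lemma in_subalgE (R S : comNzRingType) (phi : R -> S) xs n b :
  size xs = n -> in_subalg phi xs b -> exists p : mpoly R n, b = evalm phi n p xs.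
Proof. by move=> <-. Qed.

Lemma in_subalg_sub (R S : comNzRingType) (phi : R -> S) xs ys b :
  rh phi -> (forall x, x \in xs -> in_subalg phi ys x) ->
  in_subalg phi xs b -> in_subalg phi ys b.
Proof.
move=> h sub [p ->]; apply: evalm_closed => //.
- move=> x y [p1 ->] [p2 ->]; exists (p1 + p2).
  by have [-> _ _] := rh_evalm (size ys) ys h.
- move=> x y [p1 ->] [p2 ->]; exists (p1 * p2).
  by have [_ -> _] := rh_evalm (size ys) ys h.
- by move=> a; exists (cm _ a); rewrite evalm_cm.
Qed.

Lemma in_subalg_mem (R S : comNzRingType) (phi : R -> S) xs x :
  rh phi -> x \in xs -> in_subalg phi xs x.
Proof.
move=> h xin; exists (var R (size xs) (index x xs)).
by rewrite evalm_var ?index_mem // nth_index.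
Qed.

Lemma horner_polyC_X (R : comNzRingType) (c : {poly R}) :
  (map_poly (fun a => a%:P) c).['X] = c.
Proof.
have le : (size (map_poly (fun a : R => a%:P) c) <= size c)%N by apply: size_poly.
rewrite (horner_coef_wide _ le) -[RHS]coefK poly_def.
by apply: eq_bigr => i _; rewrite coef_map_id0 ?polyC0 // mul_polyC.
Qed.

Lemma evalm_vars (R : comNzRingType) n (c : mpoly R n) : evalm (cm n) n c (vars R n) = c.
Proof.
elim: n c => [|m IH] c; first by [].
rewrite evalm_h; last exact: rh_cm.
rewrite (@eq_map_poly _ _ _ (fun c0 => (c0 : mpoly R m)%:P)) ?horner_polyC_X // => c0 /=.
rewrite -[in RHS](IH c0) (evalm_comm _ _ _ (@rh_polyC _)).
exact: evalm_ext.
Qed.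

Definition der (R S : comNzRingType) (phi : R -> S) (d : S -> S) : Prop :=
  [/\ forall x y, d (x + y) = d x + d y, forall x y, d (x * y) = x * d y + y * d x &
      forall a, d (phi a) = 0].

Lemma der0 (R S : comNzRingType) (phi : R -> S) d : der phi d -> d 0 = 0.
Proof. by case=> dD _ _; apply: (@addrI _ (d 0)); rewrite -dD !addr0. Qed.

Lemma der_sum (R S : comNzRingType) (phi : R -> S) d (I : Type) (r : seq I) (P : pred I) F :
  der phi d -> d (\sum_(i <- r | P i) F i) = \sum_(i <- r | P i) d (F i).
Proof. by move=> h; have d0 := der0 h; case: h => dD _ _; apply: (big_morph d dD d0). Qed.

Lemma derMn (R S : comNzRingType) (phi : R -> S) d : der phi d -> forall x k, d (x *+ k) = d x *+ k.
Proof.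
move=> h x; have d0 := der0 h; case: h => dD _ _; elim=> [|k IH]; first by rewrite !mulr0n.
by rewrite !mulrS dD IH.
Qed.

Lemma der1 (R S : comNzRingType) (phi : R -> S) d : der phi d -> d 1 = 0.
Proof.
case=> dD dM _; apply: (@addrI _ (d 1)); rewrite addr0.
by have := dM 1 1; rewrite mulr1 mul1r => <-.
Qed.

Lemma derX (R S : comNzRingType) (phi : R -> S) d : der phi d ->
  forall x k, d (x ^+ k) = x ^+ k.-1 *+ k * d x.
Proof.
move=> h x; have d1 := der1 h; case: h => dD dM _; elim=> [|k IH].
  by rewrite expr0 d1 mulr0n mul0r.
rewrite exprS dM IH; case: k IH => [|k] IH /=.
  by rewrite !mulr0n mul0r mulr0 add0r mulr1n.
by rewrite mulrA mulrnAr -exprS -mulrDl -mulrSr.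
Qed.

Fixpoint pd (R : comNzRingType) (n i : nat) {struct n} : mpoly R n -> mpoly R n :=
  match n return mpoly R n -> mpoly R n with
  | 0 => fun _ => 0
  | m.+1 => fun p =>
     match i with
     | i'.+1 => (map_poly (@pd R m i') (p : {poly mpoly R m}) : {poly mpoly R m})
     | 0 => deriv (p : {poly mpoly R m})
     end
  end.

Lemma pd_der (R : comNzRingType) n i : der (@cm R n) (@pd R n i).
Proof.
elim: n i => [|m IH] i; rewrite /der /=.
  by split=> [x y|x y|a]; rewrite ?mulr0 ?addr0.
case: i => [|i].
  split=> [x y|x y|a]; first exact: derivD.
    by rewrite derivM addrC [_^`() * _]mulrC.
  by rewrite derivC.
have [dD dM dC] := IH i; have d0 := der0 (IH i).
split=> [x y|x y|a].
- by apply/polyP=> j; rewrite coefD !coef_map_id0 // coefD dD.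
- apply/polyP=> j; rewrite [X in _ + X]mulrC coefD !coefM !coef_map_id0 //.
  rewrite coefM (der_sum _ _ _ (IH i)) -big_split /=.
  by apply: eq_bigr => k _; rewrite dM !coef_map_id0 // [y`_ _ * _]mulrC.
- by apply/polyP=> j; rewrite coef_map_id0 // !coefC; case: (j == 0%N); rewrite ?dC ?d0.
Qed.

Lemma size_deriv_le (R : comNzRingType) (p : {poly R}) : (size p^`() <= size p)%N.
Proof. by rewrite /deriv; apply: leq_trans (size_poly _ _) (leq_pred _). Qed.

Lemma chain (R S : comNzRingType) (phi : R -> S) (d : S -> S) m (p : mpoly R m) xs :
  rh phi -> der phi d ->
  d (evalm phi m p xs) = \sum_(i < m) evalm phi m (@pd R m i p) xs * d (nth 0 xs i).
Proof.
move=> h hd; have d0 := der0 hd; have [dD dM dC] := hd.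
elim: m p xs => [|m IH] p xs.
  by rewrite big_ord0 /=; apply: dC.
set N := size (p : {poly mpoly R m}).
set hh := head 0 xs; set xs' := behead xs.
have L : d (evalm phi m.+1 p xs) = \sum_(j < N)
   (evalm phi m (p : {poly mpoly R m})`_j xs' * (hh ^+ j.-1 *+ j * d hh) +
    hh ^+ j * d (evalm phi m (p : {poly mpoly R m})`_j xs')).
  by rewrite /= (der_sum _ _ _ hd); apply: eq_bigr => j _; rewrite dM (derX hd).
rewrite L big_split big_ord_recl /=; congr (_ + _).
- have le : (size (p : {poly mpoly R m})^`() <= N)%N by apply: size_deriv_le.
  rewrite -/(evalm phi m.+1 _ xs) (@evalm_wide _ _ phi m _ xs N h le) big_distrl /=.
  rewrite -(@sum_pad _ N N.+1 (fun j : nat => evalm phi m (p : {poly mpoly R m})`_j xs' * (hh ^+ j.-1 *+ j * d hh))); last by [].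
    rewrite big_ord_recl /= mulr0n mul0r mulr0 add0r nth0 -/hh.
    apply: eq_bigr => j _; rewrite coef_deriv.
    have [eD eM e1] := rh_evalm m xs' h.
    rewrite (rhMn (rh_evalm m xs' h)) mulrA mulrnAr mulrnAl.
    by rewrite /bump /= add1n add0n -!mulrnAl.
  move=> j lej; rewrite nth_default //.
  by rewrite evalm0 // mul0r.
- rewrite (eq_bigr (fun j : 'I_N => \sum_(i < m) hh ^+ j *
      (evalm phi m (@pd R m i (p : {poly mpoly R m})`_j) xs' * d (nth 0 xs' i)))); last first.
    by move=> j _; rewrite IH big_distrr.
  rewrite exchange_big /=; apply: eq_bigr => i _.
  have le : (size (map_poly (@pd R m i) (p : {poly mpoly R m})) <= N)%N by apply: size_poly.
  rewrite -/(evalm phi m.+1 _ xs) (@evalm_wide _ _ phi m _ xs N h le) big_distrl /=.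
  apply: eq_bigr => j _; rewrite coef_map_id0; last exact: (der0 (@pd_der R m i)).
  by rewrite -/xs' -/hh nth_behead -mulrA mulrCA.
Qed.

Fixpoint mu (R : comNzRingType) (n : nat) {struct n} : mpoly R n -> nat :=
  match n return mpoly R n -> nat with
  | 0 => fun c => nat_of_bool (c != 0)
  | m.+1 => fun p => (\sum_(j < size (p : {poly mpoly R m})) j.+1 * @mu R m (p : {poly mpoly R m})`_j)%N
  end.

Lemma mu0 (R : comNzRingType) n : @mu R n 0 = 0%N.
Proof. by case: n => [|n] /=; rewrite ?eqxx // size_poly0 big_ord0. Qed.

Lemma mu_wide (R : comNzRingType) m (p : mpoly R m.+1) N :
  (size (p : {poly mpoly R m}) <= N)%N ->
  @mu R m.+1 p = (\sum_(j < N) j.+1 * @mu R m (p : {poly mpoly R m})`_j)%N.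
Proof.
move=> le /=; rewrite (@sum_padn (size (p : {poly mpoly R m})) N (fun j => j.+1 * @mu R m (p : {poly mpoly R m})`_j)%N) //.
by move=> j lej; rewrite nth_default // mu0 muln0.
Qed.

Lemma mu_pos (R : comNzRingType) n (c : mpoly R n) : c != 0 -> (0 < @mu R n c)%N.
Proof.
elim: n c => [|m IH] c nz /=; first by rewrite nz.
have sz : (0 < size (c : {poly mpoly R m}))%N by rewrite size_poly_gt0.
have lt : ((size (c : {poly mpoly R m})).-1 < size (c : {poly mpoly R m}))%N by rewrite ltn_predL.
rewrite (bigD1 (Ordinal lt)) //= addn_gt0 muln_gt0 /=; apply/orP; left.
by apply: IH; rewrite -lead_coefE lead_coef_eq0.
Qed.

Lemma sum_lt (N : nat) (F G : nat -> nat) (k : 'I_N) :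
  (forall j, F j <= G j)%N -> (F k < G k)%N ->
  (\sum_(j < N) F j < \sum_(j < N) G j)%N.
Proof.
move=> FG Fk; rewrite (bigD1 k) //= [X in (_ < X)%N](bigD1 k) //= -addSn.
by apply: leq_add => //; apply: leq_sum => j _.
Qed.

Lemma mu_Mn (R : comNzRingType) n (c : mpoly R n) k : (@mu R n (c *+ k) <= @mu R n c)%N.
Proof.
elim: n c => [|m IH] c /=.
  case: (c =P 0) => [->|/eqP nz]; first by rewrite mul0rn eqxx.
  by case: (_ != 0).
have le : (size ((c : {poly mpoly R m}) *+ k) <= size (c : {poly mpoly R m}))%N.
  by apply/leq_sizeP => j le; rewrite coefMn nth_default // mul0rn.
rewrite -/(@mu R m.+1 _) (mu_wide le); apply: leq_sum => j _.
by rewrite coefMn leq_mul2l IH orbT.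
Qed.

Lemma mu_pd_lt (R : comNzRingType) n i (c : mpoly R n) :
  c != 0 -> (@mu R n (@pd R n i c) < @mu R n c)%N.
Proof.
elim: n i c => [|m IH] i c nz.
  by rewrite /= eqxx (negbTE nz).
have IHle : forall i (c : mpoly R m), (@mu R m (@pd R m i c) <= @mu R m c)%N.
  move=> i0 c0; case: (c0 =P 0) => [->|/eqP nz0]; last exact: ltnW (IH _ _ nz0).
  by rewrite (der0 (@pd_der R m i0)).
set N := size (c : {poly mpoly R m}).
have sz : (0 < N)%N by rewrite size_poly_gt0.
have lead : (0 < @mu R m (c : {poly mpoly R m})`_N.-1)%N.
  by apply: mu_pos; rewrite -lead_coefE lead_coef_eq0.
case: i => [|i].
  have le1 : (@mu R m.+1 (@pd R m.+1 0 c) <=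
      \sum_(j < N) j.+1 * @mu R m (c : {poly mpoly R m})`_j.+1)%N.
    rewrite /= -/(@mu R m.+1 _) (mu_wide (size_deriv_le _)); apply: leq_sum => j _.
    by rewrite coef_deriv leq_mul2l mu_Mn orbT.
  apply: (leq_ltn_trans le1).
  have -> : (\sum_(j < N) j.+1 * @mu R m (c : {poly mpoly R m})`_j.+1 =
      \sum_(j < N.+1) j * @mu R m (c : {poly mpoly R m})`_j)%N.
    by rewrite big_ord_recl /= mul0n add0n.
  rewrite (mu_wide (leqnSn N)).
  have ltk : (N.-1 < N.+1)%N by rewrite ltnS leq_pred.
  apply: (@sum_lt N.+1 (fun j => j * @mu R m (c : {poly mpoly R m})`_j)%N
     (fun j => j.+1 * @mu R m (c : {poly mpoly R m})`_j)%N (Ordinal ltk)) => [j|] /=.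
    by rewrite leq_mul2r leqnSn orbT.
  by rewrite ltn_pmul2r.
have ltk : (N.-1 < N)%N by rewrite ltn_predL.
rewrite /= -/(@mu R m.+1 _) (mu_wide (size_poly _ _)).
apply: (@sum_lt N (fun j => j.+1 * @mu R m (map_poly (@pd R m i) (c : {poly mpoly R m}))`_j)%N
     (fun j => j.+1 * @mu R m (c : {poly mpoly R m})`_j)%N (Ordinal ltk)) => [j|] /=.
  by rewrite coef_map_id0 ?(der0 (@pd_der R m i)) // leq_mul2l IHle orbT.
rewrite coef_map_id0 ?(der0 (@pd_der R m i)) // ltn_mul2l /=.
by apply: IH; rewrite -lead_coefE lead_coef_eq0.
Qed.

Lemma mulrn_eqQ (R : comUnitRingType) n (c : mpoly R n) k :
  containsQ R -> (0 < k)%N -> c *+ k = 0 -> c = 0.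
Proof.
move=> hQ hk ck; have u := hQ k hk.
have hc := rh_cm R n; have [_ cM c1] := hc.
have E : c *+ k = c * cm n (k%:R : R) by rewrite (rhMn hc) c1 mulr_natr.
by rewrite -[c]mulr1 -c1 -(mulrV u) cM mulrA -E ck mul0r.
Qed.

Lemma pd_const (R : comUnitRingType) n (F : mpoly R n) : containsQ R ->
  (forall i, (i < n)%N -> @pd R n i F = 0) -> exists c, F = cm n c.
Proof.
move=> hQ; elim: n F => [|m IH] F hF; first by exists F.
have d0 := hF 0%N isT; rewrite /= in d0.
have sz : (size (F : {poly mpoly R m}) <= 1)%N.
  apply/leq_sizeP => [[|j]] //= _.
  apply: (@mulrn_eqQ R m _ j.+1 hQ isT).
  by rewrite -coef_deriv d0 coef0.
have EF := size1_polyC sz.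
have [c Ec] : exists c, (F : {poly mpoly R m})`_0 = cm m c.
  apply: IH => i lti; have := hF i.+1 lti; rewrite /= EF.
  move/polyP => /(_ 0%N); rewrite coef_map_id0 ?(der0 (@pd_der R m i)) // coefC coef0 /=.
  by [].
by exists c; rewrite EF Ec.
Qed.

Lemma pd_var (R : comNzRingType) n i j : (i < n)%N -> (j < n)%N ->
  @pd R n i (var R n j) = (j == i)%:R.
Proof.
elim: n i j => [|m IH] [|i] [|j] //= lti ltj.
- by rewrite derivX.
- by rewrite derivC.
- apply/polyP=> k; rewrite coef_map_id0 ?(der0 (@pd_der R m i)) // coefX coef0.
  by case: (k == 1%N); rewrite ?(der1 (@pd_der R m i)) ?(der0 (@pd_der R m i)).
- apply/polyP=> k; rewrite coef_map_id0 ?(der0 (@pd_der R m i)) // coefC -polyC_natr coefC.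
  case: (k == 0%N); first by rewrite IH.
  exact: (der0 (@pd_der R m i)).
Qed.

Lemma pd_mapm (R S : comNzRingType) (f : R -> S) n i (H : mpoly R n) :
  rh f -> @pd S n i (mapm f n H) = mapm f n (@pd R n i H).
Proof.
move=> hf; elim: n i H => [|m IH] i H /=; first by rewrite (rh0 hf).
have hm := rh_mapm m hf; have m0 := rh0 hm.
case: i => [|i].
  apply/polyP=> k; rewrite coef_deriv !coef_map_id0 // coef_deriv.
  by rewrite (rhMn hm).
apply/polyP=> k; rewrite !coef_map_id0 ?(der0 (@pd_der R m i)) ?(der0 (@pd_der S m i)) ?m0 //.
Qed.

Lemma mapm_inj0 (R S : comNzRingType) (f : R -> S) n (H : mpoly R n) :
  rh f -> (forall x, f x = 0 -> x = 0) -> mapm f n H = 0 -> H = 0.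
Proof.
move=> hf f0; elim: n H => [|m IH] H /=; first exact: f0.
move=> /polyP E; apply/polyP => k; rewrite coef0; apply: IH.
by have := E k; rewrite coef_map_id0 ?(rh0 (rh_mapm m hf)) // coef0.
Qed.

Lemma indep (R : comUnitRingType) n (X : seq (mpoly R n)) :
  containsQ R -> coord_sys (cm n) n X ->
  forall F : mpoly R n, evalm (cm n) n F X = 0 -> F = 0.
Proof.
move=> hQ [szX gen].
have hc := rh_cm R n.
have QE : forall j : 'I_n, exists Q : mpoly R n, var R n j = evalm (cm n) n Q X.
  by move=> j; apply: (in_subalgE szX (gen _)).
have [Q HQ] := fin_all_exists QE.
pose J : 'M[mpoly R n]_n := \matrix_(i, l) @pd R n l (nth 0 X i).
pose M : 'M[mpoly R n]_n := \matrix_(j, i) evalm (cm n) n (@pd R n i (Q j)) X.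
have MJ : M *m J = 1%:M.
  apply/matrixP => j l; rewrite !mxE.
  have := chain (Q j) X hc (@pd_der R n l); rewrite -HQ pd_var // => ->.
  by apply: eq_bigr => i _; rewrite !mxE.
have JM : J *m M = 1%:M := mulmx1C MJ.
suff: forall N (F : mpoly R n), (@mu R n F < N)%N -> evalm (cm n) n F X = 0 -> F = 0.
  by move=> H F; apply: (H (@mu R n F).+1).
elim=> [|N IHN] F //= ltF FX.
have vF : forall i : 'I_n, evalm (cm n) n (@pd R n i F) X = 0.
  pose v : 'rV[mpoly R n]_n := \row_i evalm (cm n) n (@pd R n i F) X.
  have vJ : v *m J = 0.
    apply/matrixP => z l; rewrite !mxE.
    have := chain F X hc (@pd_der R n l); rewrite FX (der0 (@pd_der R n l)) => E.
    by rewrite [RHS]E; apply: eq_bigr => i _; rewrite !mxE.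
  have v0 : v = 0 by rewrite -[v]mulmx1 -JM mulmxA vJ mul0mx.
  by move=> i; have := congr1 (fun w : 'rV_n => w 0 i) v0; rewrite !mxE.
case: (F =P 0) => [//|/eqP nzF].
have pd0 : forall i, (i < n)%N -> @pd R n i F = 0.
  move=> i lti; apply: IHN; last exact: (vF (Ordinal lti)).
  exact: leq_trans (mu_pd_lt i nzF) _.
have [c Ec] := pd_const hQ pd0.
by move: FX; rewrite Ec evalm_cm // => ->.
Qed.

Lemma in_subalgD (R S : comNzRingType) (phi : R -> S) xs x y :
  rh phi -> in_subalg phi xs x -> in_subalg phi xs y -> in_subalg phi xs (x + y).
Proof.
move=> h [p1 ->] [p2 ->]; exists (p1 + p2).
by have [-> _ _] := rh_evalm (size xs) xs h.
Qed.

Lemma in_subalgM (R S : comNzRingType) (phi : R -> S) xs x y :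
  rh phi -> in_subalg phi xs x -> in_subalg phi xs y -> in_subalg phi xs (x * y).
Proof.
move=> h [p1 ->] [p2 ->]; exists (p1 * p2).
by have [_ -> _] := rh_evalm (size xs) xs h.
Qed.

Lemma in_subalgC (R S : comNzRingType) (phi : R -> S) xs a :
  rh phi -> in_subalg phi xs (phi a).
Proof. by move=> h; exists (cm _ a); rewrite evalm_cm. Qed.

Lemma isDer_der (R S : comNzRingType) (phi : R -> S) d :
  rh phi -> isDer phi d -> der phi d.
Proof.
move=> h [dD dZ dM]; have d1 : d 1 = 0.
  apply: (@addrI _ (d 1)); rewrite addr0.
  by have := dM 1 1; rewrite mulr1 mul1r => <-.
split=> // a; have := dZ a 1; rewrite mulr1 => ->.
by rewrite d1 mulr0.
Qed.

Lemma killedP (R S : comNzRingType) (phi : R -> S) d xs :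
  rh phi -> der phi d -> (forall x, x \in xs -> d x = 0) -> killed phi d xs.
Proof.
move=> h [dD dM dC] kx b [p ->]; apply: (@evalm_closed _ _ _ _ p xs (fun x => d x = 0)) => //.
- by move=> x y x0 y0; rewrite dD x0 y0 addr0.
- by move=> x y x0 y0; rewrite dM x0 y0 !mulr0 addr0.
Qed.

Lemma mapm_var (R S : comNzRingType) (f : R -> S) n i :
  rh f -> mapm f n (var R n i) = var S n i.
Proof.
move=> h; elim: n i => [|m IH] [|i] /=; rewrite ?(rh0 h) //.
  by rewrite map_polyXr //; apply: rh_mapm.
by rewrite map_polyCr ?IH //; apply: rh_mapm.
Qed.

Lemma map_vars (R : comNzRingType) n (Y : seq (mpoly R n)) :
  size Y = n -> map (fun y => evalm (cm n) n y Y) (vars R n) = Y.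
Proof.
move=> sz; apply: (@eq_from_nth _ 0); first by rewrite size_map size_vars sz.
move=> i; rewrite size_map size_vars => lt.
rewrite (nth_map 0) ?size_vars // nth_vars // evalm_var //.
exact: rh_cm.
Qed.

Lemma subst_vars (R : comNzRingType) n (Y : seq (mpoly R n)) m (P : mpoly R m) k :
  size Y = n ->
  evalm (cm n) n (evalm (cm n) m P (take k (vars R n))) Y = evalm (cm n) m P (take k Y).
Proof.
move=> sz; have hc := rh_cm R n.
rewrite (evalm_comm _ _ _ (rh_evalm n Y hc)) map_take map_vars //.
by apply: evalm_ext => a /=; rewrite evalm_cm.
Qed.

Lemma in_subalgX (R S : comNzRingType) (phi : R -> S) xs x k :
  rh phi -> in_subalg phi xs x -> in_subalg phi xs (x ^+ k).
Proof.
move=> h hx; elim: k => [|k IH]; last by rewrite exprS; apply: in_subalgM.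
by rewrite expr0; have [_ _ <-] := h; apply: in_subalgC.
Qed.

Lemma pd_sub (R : comUnitRingType) n k (H : mpoly R n) : containsQ R ->
  (forall i, (k <= i)%N -> (i < n)%N -> @pd R n i H = 0) ->
  in_subalg (cm n) (take k (vars R n)) H.
Proof.
move=> hQ; elim: n k H => [|m IH] k H hH; first by exists H.
case: k hH => [|k] hH.
  by have [c ->] := pd_const hQ (fun i lt => hH i (leq0n i) lt); exists c.
set L := take k.+1 (vars R m.+1).
have hc := rh_cm R m.+1.
have hX : in_subalg (cm m.+1) L ('X : {poly mpoly R m}).
  by apply: in_subalg_mem => //; rewrite /L /= inE eqxx.
have hC : forall j, in_subalg (cm m.+1) L (((H : {poly mpoly R m})`_j)%:P).
  move=> j.
  have Hj : in_subalg (cm m) (take k (vars R m)) (H : {poly mpoly R m})`_j.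
    apply: IH => i ki im; have := hH i.+1 ki im; rewrite /= => /polyP /(_ j).
    by rewrite coef_map_id0 ?(der0 (@pd_der R m i)) // coef0.
  case: Hj => p Ep.
  apply: (@in_subalg_sub _ _ _ (map (fun c => (c : mpoly R m)%:P) (take k (vars R m)))) => //.
    move=> x xin; apply: in_subalg_mem => //.
    by rewrite /L /= inE -map_take xin orbT.
  rewrite Ep (evalm_comm _ _ _ (@rh_polyC _)).
  exact: in_subalg_evalm.
rewrite -[H]coefK poly_def.
apply: (big_ind (in_subalg (cm m.+1) L)).
- by rewrite -(rh0 hc); apply: in_subalgC.
- by move=> x y; apply: in_subalgD.
- by move=> j _; rewrite -mul_polyC; apply: in_subalgM => //; apply: in_subalgX.
Qed.

Lemma rh_tofrac (A : idomainType) : rh (@tofrac A).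
Proof. by split=> *; rewrite ?tofracD ?tofracM ?tofrac1. Qed.

Lemma containsQK (A : idomainType) : containsQ A -> containsQ {fraction A}.
Proof.
move=> hQ m hm; rewrite unitfE -(rmorph_nat (@tofrac A)) tofrac_eq0.
by apply/eqP => e; have := hQ m hm; rewrite e unitr0.
Qed.

Lemma convK (A : idomainType) n m (P : mpoly A m) xs :
  mapm (@tofrac A) n (evalm (cm n) m P xs) =
  evalm (cm n) m (mapm (@tofrac A) m P) (map (mapm (@tofrac A) n) xs).
Proof.
have ht := rh_tofrac A; have hf := rh_mapm n ht.
rewrite (evalm_comm _ _ _ hf) evalm_mapm //; last exact: rh_cm.
by apply: evalm_ext => a /=; apply: mapm_cm.
Qed.

Lemma gammaK (A : idomainType) n (D : mpoly A n -> mpoly A n)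
    (DK : mpoly {fraction A} n -> mpoly {fraction A} n) r X :
  isDer (@cm {fraction A} n) DK ->
  (forall b, DK (mapm (@tofrac A) n b) = mapm (@tofrac A) n (D b)) ->
  GammaD (@cm A n) n D r X ->
  GammaD (@cm {fraction A} n) n DK r (map (mapm (@tofrac A) n) X).
Proof.
move=> hDK hcomm [[szX gen] kil].
have ht := rh_tofrac A; have hf := rh_mapm n ht.
have hcA := rh_cm A n; have hcK := rh_cm {fraction A} n.
split; first split.
- by rewrite size_map.
- move=> c; rewrite -(evalm_vars c).
  apply: (@evalm_closed _ _ _ _ c _ (in_subalg (cm n) (map (mapm (@tofrac A) n) X))) => //.
  + by move=> x y; apply: in_subalgD.
  + by move=> x y; apply: in_subalgM.
  + by move=> a; apply: in_subalgC.
  + move=> x /(nthP 0) [i lti <-]; rewrite size_vars in lti.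
    rewrite nth_vars // -(mapm_var n i ht).
    have [Q ->] := in_subalgE szX (gen (var A n i)).
    by rewrite convK; apply: in_subalg_evalm.
- apply: killedP => //; first exact: isDer_der.
  move=> x; rewrite -map_take => /mapP [y yin ->]; rewrite hcomm (kil y) ?(rh0 hf) //.
  exact: in_subalg_mem.
Qed.

Lemma dir (A : idomainType) n (D : mpoly A n -> mpoly A n)
    (DK : mpoly {fraction A} n -> mpoly {fraction A} n) r X X' b :
  containsQ A -> isDer (@cm {fraction A} n) DK ->
  (forall b, DK (mapm (@tofrac A) n b) = mapm (@tofrac A) n (D b)) ->
  has_rank (@cm {fraction A} n) n DK r -> rigid (@cm {fraction A} n) n DK ->
  GammaD (@cm A n) n D r X -> GammaD (@cm A n) n D r X' ->
  in_subalg (@cm A n) (take (n - r) X) b -> in_subalg (@cm A n) (take (n - r) X') b.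
Proof.
move=> hQ hDK hcomm rK rigK GX GX'.
have GXK := gammaK hDK hcomm GX; have GX'K := gammaK hDK hcomm GX'.
have [[szX _] _] := GX; have [[szX' genX'] _] := GX'.
set k := (n - r)%N.
have kn : (k <= n)%N := leq_subr r n.
have ht := rh_tofrac A; have hf := rh_mapm n ht.
have hcA := rh_cm A n; have hcK := rh_cm {fraction A} n.
case=> P ->; set bb := evalm _ _ P _.
have fb : in_subalg (cm n) (take k (map (mapm (@tofrac A) n) X)) (mapm (@tofrac A) n bb).
  by rewrite /bb convK map_take; apply: in_subalg_evalm.
have fb' := (rigK r rK _ _ GXK GX'K _).1 fb.
have szk : size (take k (map (mapm (@tofrac A) n) X')) = k by rewrite size_takel // size_map szX'.
have [G EG] := in_subalgE szk fb'.
have [H EH] := in_subalgE szX' (genX' bb).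
rewrite EH.
have eqK : mapm (@tofrac A) n H = evalm (cm n) k G (take k (vars {fraction A} n)).
  apply/eqP; rewrite -subr_eq0; apply/eqP.
  apply: (indep (containsQK hQ) GX'K.1).
  have [eD _ _] := rh_evalm n (map (mapm (@tofrac A) n) X') hcK.
  rewrite eD (rhN (rh_evalm n (map (mapm (@tofrac A) n) X') hcK)).
  rewrite subst_vars ?size_map // -EG.
  by rewrite -convK -EH subrr.
have pdH : forall i, (k <= i)%N -> (i < n)%N -> @pd A n i H = 0.
  move=> i ki lti; apply: (@mapm_inj0 _ _ (@tofrac A) n (@pd A n i H) ht).
    by move=> x /eqP; rewrite tofrac_eq0 => /eqP.
  rewrite -pd_mapm // eqK (chain _ _ hcK (@pd_der _ n i)).
  apply: big1 => j _; rewrite nth_take // nth_vars; last exact: leq_trans (ltn_ord j) kn.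
  rewrite pd_var //; last exact: leq_trans (ltn_ord j) kn.
  by rewrite ltn_eqF ?mulr0 //; apply: leq_trans (ltn_ord j) ki.
have [P' EP'] := pd_sub hQ pdH.
by rewrite EP' subst_vars //; apply: in_subalg_evalm.
Qed.

Unset Implicit Arguments.

Theorem theorem1p2 (A : idomainType) (n : nat)
    (D : mpoly A n -> mpoly A n)
    (DK : mpoly {fraction A} n -> mpoly {fraction A} n) :
  containsQ A ->
  isLND (@cm A n) D ->
  (* DK is the extension of D to K (x)_A B = K^[n] *)
  isDer (@cm {fraction A} n) DK ->
  (forall b, DK (mapm (@tofrac A) n b) = mapm (@tofrac A) n (D b)) ->
  (* rank D = rank D_K *)
  (exists r, has_rank (@cm A n) n D r /\ has_rank (@cm {fraction A} n) n DK r) ->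
  rigid (@cm {fraction A} n) n DK ->
  rigid (@cm A n) n D.
Proof.
move=> hQ _ hDK hcomm [r [rD rDK]] rigK r0 rD0 X X' GX GX' b.
have e : r0 = r.
  apply/eqP; rewrite eqn_leq (rD0.2 r rD.1) (rD.2 r0 rD0.1) //.
subst r0; split; [exact: (dir hQ hDK hcomm rDK rigK GX GX') | exact: (dir hQ hDK hcomm rDK rigK GX' GX)].
Qed.
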